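(* Let $b>1$, $p\ge1$ and $R\subseteq\{0,\ldots,p-1\}$ be such that $(p,R)$ is proper. Let $k$ be the greatest divisor of $p$ coprime with $b$. If two states $i,i'$ of $\mathcal{A}_{R,p}$ are Nerode-equivalent, then $i\equiv i'\pmod k$.
   Context: $A_b=\{0,\ldots,b-1\}$. $\mathcal{A}_{R,p}$ is the complete deterministic automaton over $A_b$ with states $\{0,\ldots,p-1\}$, initial state $0$, final states $R$, and transitions $n\xrightarrow{a}(nb+a)\bmod p$. The pair $(p,R)$ is proper if $p$ is the smallest period of the purely periodic set $R+p\mathbb{N}$, i.e. there is no $p'<p$, $p'\ge1$, and $R'\subseteq\{0,\ldots,p'-1\}$ with $R+p\mathbb{N}=R'+p'\mathbb{N}$. Two states $s,s'$ are Nerode-equivalent if for every word $u$, $s\cdot u$ is final iff $s'\cdot u$ is final, where $s\cdot u$ is the state reached from $s$ by reading $u$. *)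

(* Defs.v *)
From mathcomp Require Import all_boot.
Set Implicit Arguments. Unset Strict Implicit. Unset Printing Implicit Defensive.

(* Automaton A_{R,p} over the alphabet A_b = {0,...,b-1} (letters : 'I_b).
   States are the naturals 0..p-1; initial state 0; transitions
   n --a--> (n*b + a) mod p; final states: those in R : {set 'I_p}. *)

Definition trans (b p n : nat) (a : 'I_b) : nat := (n * b + a) %% p.

Definition run (b p s : nat) (u : seq 'I_b) : nat := foldl (trans p) s u.

Definition is_final (p : nat) (R : {set 'I_p}) (n : nat) : bool :=
  [exists i in R, val i == n].

Definition in_periodic (p : nat) (R : {set 'I_p}) (n : nat) : bool :=
  [exists i in R, val i == n %% p].

Definition proper_pair (p : nat) (R : {set 'I_p}) : Prop :=
  forall (p' : nat) (R' : {set 'I_p'}), 1 <= p' -> p' < p ->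
    ~ (forall n, in_periodic R n = in_periodic R' n).

Definition nerode_equiv (b p : nat) (R : {set 'I_p}) (s s' : nat) : Prop :=
  forall u : seq 'I_b, is_final R (run p s u) = is_final R (run p s' u).

(* Main.v *)
Require Import Defs.
From mathcomp Require Import all_boot.

Lemma exists_word (b p n v : nat) : 0 < p -> v < b ^ n ->
  exists u : seq 'I_b, forall s, s < p -> run p s u = (s * b ^ n + v) %% p.
Proof.
elim: n v => [|n IH] v Hp Hv.
  exists [::] => s Hs; rewrite /run /= expn0 muln1.
  by move: Hv; rewrite expn0 ltnS leqn0 => /eqP ->; rewrite addn0 modn_small.
have hb : 0 < b by move: Hv; case: (b) => //; rewrite exp0n.
have Hv' : v %/ b < b ^ n by rewrite ltn_divLR // -expnSr.
have [u Hu] := IH (v %/ b) Hp Hv'.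
exists (rcons u (Ordinal (ltn_pmod v hb))) => s Hs.
rewrite /run -cats1 foldl_cat /= -/(run p s u) Hu // /trans /=.
rewrite -modnDml modnMml modnDml; congr (_ %% p).
by rewrite {3}(divn_eq v b) expnSr mulnDl mulnA addnA.
Qed.

Theorem proposition20 (b p : nat) (R : {set 'I_p}) (k : nat) (i i' : nat) :
  1 < b -> 1 <= p -> proper_pair R ->
  k %| p -> coprime k b ->
  (forall d, d %| p -> coprime d b -> d <= k) ->
  i < p -> i' < p ->
  nerode_equiv b R i i' ->
  i = i' %[mod k].
Proof.
move=> hb hp hprop hk hkb _ hi hi' hN.
set N := b ^ p.
have hpN : p <= N by apply: ltnW; apply: ltn_expl.
set f := in_periodic R.
have key : forall y, f (i * N + y) = f (i' * N + y).
  move=> y.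
  have [u Hu] := @exists_word b p p _ hp (leq_trans (ltn_pmod y hp) hpN).
  have := hN u; rewrite !Hu //.
  by rewrite /f /in_periodic /is_final !modnDmr.
have fmod : forall x y, x = y %[mod p] -> f x = f y.
  by move=> x y; rewrite /f /in_periodic => ->.
set t := i' * N + (p - 1) * (i * N).
have ft : forall x, f (x + t) = f x.
  move=> x; rewrite /t addnA [x + _]addnC -addnA -key; apply: fmod.
  have -> : i * N + (x + (p - 1) * (i * N)) = (i * N) * p + x.
    rewrite addnCA addnC; congr (_ + _).
    by rewrite -{1}(mul1n (i * N)) -mulnDl addnC subnK // mulnC.
  by rewrite modnMDl.
have fct : forall c x, f (x + c * t) = f x.
  elim=> [|c IH] x; first by rewrite mul0n addn0.
  by rewrite mulSn [t + _]addnC addnA ft IH.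
set g := gcdn t p.
have fg : forall x, f (x + g) = f x.
  move=> x; case t0: (t == 0).
    rewrite /g (eqP t0) gcd0n; apply: fmod; by rewrite modnDr.
  have [a _ Ha] := Bezoutl p (neq0_lt0n t0).
  move/dvdnP: Ha => [c Hc].
  rewrite -(fct c x) -Hc; apply: fmod.
  by rewrite addnA [_ + a * p]addnC modnMDl.
have fgc : forall c x, f (x + c * g) = f x.
  elim=> [|c IH] x; first by rewrite mul0n addn0.
  by rewrite mulSn [g + _]addnC addnA fg IH.
have g0 : 0 < g by rewrite gcdn_gt0 hp orbT.
have gp : g = p.
  apply/eqP; rewrite eqn_leq dvdn_leq ?dvdn_gcdr //=.
  rewrite leqNgt; apply/negP => glt.
  apply: (hprop g [set j : 'I_g | f j] g0 glt) => n.
  have -> : in_periodic R n = f (n %% g).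
    by change (f n = f (n %% g)); rewrite {1}(divn_eq n g) addnC fgc.
  rewrite /in_periodic; apply/idP/existsP.
    by move=> H; exists (Ordinal (ltn_pmod n g0)); rewrite inE H eqxx.
  by case=> j /andP [jin /eqP <-]; rewrite inE in jin.
have pt : p %| t by rewrite -gp dvdn_gcdl.
have e1 : i * N = i' * N %[mod p].
  have : (t + i * N) %% p = (i' * N + p * (i * N)) %% p.
    congr (_ %% p); rewrite /t -addnA; congr (_ + _).
    by rewrite -{2}(mul1n (i * N)) -mulnDl subnK.
  move/dvdnP: pt => [c ->]. rewrite (modnMDl c (i * N) p) (addnC (i' * N)) (mulnC p). rewrite (modnMDl (i * N) (i' * N) p); exact: id.
have e2 : i * N = i' * N %[mod k].
  by rewrite -(modn_dvdm _ hk) e1 modn_dvdm.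
have cN : coprime k N by apply: coprimeXr.
case: (leqP i i') => hii.
  apply/eqP; rewrite eq_sym eqn_mod_dvd // -(Gauss_dvdl _ cN) mulnBl.
  by rewrite -eqn_mod_dvd ?leq_mul2r ?hii ?orbT // e2.
have hii' : i' <= i by apply: ltnW.
apply/eqP; rewrite eqn_mod_dvd // -(Gauss_dvdl _ cN) mulnBl.
by rewrite -eqn_mod_dvd ?leq_mul2r ?hii' ?orbT // e2.
Qed.
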